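(* Let $q\equiv 3\pmod 4$ be a prime power. There are absolute constants $C,c>0$ such that for every $S\subset\mathbb{F}_q^2$ with $|S|\ge C q^{5/3}$, the number of rectangles with vertices in $S$ and non-zero side-lengths is at least $c\,|S|^4/q^3$.
   Context: For $u,v\in\mathbb{F}_q^2$, $u\cdot v=u_1v_1+u_2v_2$. Four points $x,z,y,t\in\mathbb{F}_q^2$ form a rectangle with vertices in the cyclic order $x,z,y,t$ if $(x-z)\cdot(y-z)=0$, $(z-y)\cdot(t-y)=0$, $(y-t)\cdot(x-t)=0$ and $(t-x)\cdot(z-x)=0$; the length of a side $uv$ is $(u-v)\cdot(u-v)$. Rectangles are counted as ordered quadruples of vertices. *)

(* Defs.v *)
From mathcomp Require Import all_boot all_algebra.
From Stdlib Require Import Reals.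
Set Implicit Arguments. Unset Strict Implicit. Unset Printing Implicit Defensive.
Import GRing.Theory.
Local Open Scope ring_scope.

Definition dotp (F : fieldType) (u v : F * F) : F := u.1 * v.1 + u.2 * v.2.
Definition subp (F : fieldType) (u v : F * F) : F * F := (u.1 - v.1, u.2 - v.2).

(* (x,z,y,t) is a rectangle with vertices in cyclic order x,z,y,t,
   all of whose side lengths are non-zero. *)
Definition is_rect_nz (F : fieldType) (x z y t : F * F) : bool :=
  [&& dotp (subp x z) (subp y z) == 0,
      dotp (subp z y) (subp t y) == 0,
      dotp (subp y t) (subp x t) == 0,
      dotp (subp t x) (subp z x) == 0,
      dotp (subp x z) (subp x z) != 0,
      dotp (subp z y) (subp z y) != 0,
      dotp (subp y t) (subp y t) != 0 &
      dotp (subp t x) (subp t x) != 0].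

(* Number of rectangles (ordered quadruples) with vertices in S and
   non-zero side lengths. *)
Definition nrect_nz (F : finFieldType) (S : {set F * F}) : nat :=
  #|[set p : (F * F) * (F * F) * (F * F) * (F * F) |
      [&& p.1.1.1 \in S, p.1.1.2 \in S, p.1.2 \in S, p.2 \in S &
          is_rect_nz p.1.1.1 p.1.1.2 p.1.2 p.2]]|.

(* Main.v *)
Require Import Defs.
From mathcomp Require Import all_boot all_algebra all_field.
From mathcomp Require Import zify ring.
Set Implicit Arguments. Unset Strict Implicit. Unset Printing Implicit Defensive.
Import GRing.Theory.

Lemma cs_nat (I : finType) (a : I -> nat) :
  ((\sum_i a i) ^ 2 <= #|I| * \sum_i (a i) ^ 2)%N.
Proof.
rewrite -leq_double -!muln2.
have -> : ((\sum_i a i) ^ 2 * 2 = \sum_i \sum_j (a i * a j * 2))%N.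
  rewrite expnS expn1 big_distrl /= big_distrl /=; apply: eq_bigr => i _.
  by rewrite big_distrr /= big_distrl /=; apply: eq_bigr => j _; lia.
have -> : ((#|I| * \sum_i a i ^ 2) * 2 = \sum_i \sum_j (a i ^ 2 + a j ^ 2))%N.
  have E : forall c, (\sum_(j : I) c = #|I| * c)%N.
    by move=> c; rewrite sum_nat_const.
  rewrite [RHS](eq_bigr (fun i => #|I| * a i ^ 2 + \sum_j a j ^ 2)%N); last first.
    by move=> i _; rewrite big_split /= E.
  rewrite big_split /= E -big_distrr /=. lia.
apply: leq_sum => i _; apply: leq_sum => j _.
rewrite !expnS !expn0 !muln1.
move: (a i) (a j) => u v.
case: (leqP u v) => h.
- rewrite -(subnK h); move: (v - u)%N => d; nia.
- rewrite -(subnK (ltnW h)); move: (u - v)%N => d; nia.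
Qed.

Lemma W4_lb (F : finType) (b : F -> F -> bool) :
  ((\sum_x \sum_y (b x y : nat)) ^ 4 <= #|F| ^ 4 *
     \sum_y \sum_y' \sum_x \sum_x' ((b x y * b x y') * (b x' y * b x' y')))%N.
Proof.
set n := (\sum_x \sum_y (b x y : nat)).
pose e y y' := (\sum_x (b x y * b x y' : nat))%N.
have E1 : forall y y', (\sum_x \sum_x' ((b x y * b x y') * (b x' y * b x' y')) = e y y' ^ 2)%N.
  move=> y y'; rewrite /e expnS expn1 big_distrl /=; apply: eq_bigr => x _.
  by rewrite big_distrr.
under eq_bigr do under eq_bigr do rewrite E1.
have CS1 := cs_nat (fun x => \sum_y (b x y : nat)).
have D : (\sum_x (\sum_y (b x y : nat)) ^ 2 = \sum_y \sum_y' e y y')%N.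
  rewrite /e. under [RHS]eq_bigr do rewrite exchange_big. rewrite exchange_big /=.
  apply: eq_bigr => x _; rewrite expnS expn1 big_distrl /=; apply: eq_bigr => y _.
  by rewrite big_distrr.
have CS2 := cs_nat (fun p : F * F => e p.1 p.2).
rewrite -pair_bigA -(pair_bigA _ (fun y y' => e y y' ^ 2)) /= card_prod in CS2.
rewrite D in CS1.
have -> : (n ^ 4 = (n ^ 2) ^ 2)%N by rewrite -expnM.
have -> : (#|F| ^ 4 = #|F| ^ 2 * #|F| ^ 2)%N by rewrite -expnD.
rewrite -mulnA.
move: CS1 CS2; rewrite -/n.
move: (\sum_y \sum_y' e y y')%N (\sum_i \sum_i0 e i i0 ^ 2)%N => A B h1 h2.
have h3 := leq_mul h1 h1.
rewrite !expnS !expn0 !muln1 in h1 h2 h3 *.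
nia.
Qed.

Lemma sum_if_eq (T : finType) (a : T) (G : T -> nat) :
  (\sum_i (if a == i then G i else 0) = G a)%N.
Proof.
rewrite (bigD1 a) //= eqxx big1 ?addn0 // => i /negPf.
by rewrite eq_sym => ->.
Qed.

Lemma W4_deg (F : finType) (b : F -> F -> bool) :
  (\sum_y \sum_y' \sum_x \sum_x' ((b x y * b x y') * (b x' y * b x' y')) <=
   \sum_y \sum_y' \sum_x \sum_x' (if (x != x') && (y != y') then
          ((b x y * b x y') * (b x' y * b x' y')) else 0)
   + 2 * #|F| * \sum_x \sum_y (b x y : nat))%N.
Proof.
set n := (\sum_x \sum_y (b x y : nat)).
have D1 : (\sum_(y : F) \sum_(y' : F) \sum_(x : F) \sum_(x' : F) (if x == x' then (b x y : nat) else 0) = #|F| * n)%N.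
  under eq_bigr do under eq_bigr do under eq_bigr do rewrite (sum_if_eq _ (fun=> _)).
  under eq_bigr do rewrite sum_nat_const.
  by rewrite -big_distrr /= exchange_big.
have D2 : (\sum_(y : F) \sum_(y' : F) \sum_(x : F) \sum_(x' : F) (if y == y' then (b x y : nat) else 0) = #|F| * n)%N.
  under eq_bigr do under eq_bigr do under eq_bigr do rewrite sum_nat_const.
  under eq_bigr do rewrite exchange_big /=.
  under eq_bigr do under eq_bigr do rewrite -big_distrr /= (sum_if_eq _ (fun=> _)).
  under eq_bigr do rewrite -big_distrr /=.
  by rewrite -big_distrr /= exchange_big.
have -> : (2 * #|F| * n = #|F| * n + #|F| * n)%N by rewrite mul2n -addnn mulnDl.
rewrite -{1}D1 -{1}D2 -!big_split /=.
apply: leq_sum => y _; rewrite -!big_split /=.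
apply: leq_sum => y' _; rewrite -!big_split /=.
apply: leq_sum => x _; rewrite -!big_split /=.
apply: leq_sum => x' _.
by case: (b x y); case: (b x y'); case: (b x' y); case: (b x' y'); case: (x == x'); case: (y == y').
Qed.

Local Open Scope ring_scope.

Lemma two_neq0 (F : finFieldType) : (#|F| %% 4 = 3)%N -> (2%:R : F) != 0.
Proof.
move=> H; apply/negP => /eqP H2.
have c2 : (2%N \in [pchar F]) by rewrite inE /= H2 eqxx.
move: H; rewrite (card_pprimeChar c2).
case: (logn _ _) => [|m] //. rewrite expnS. lia.
Qed.

Lemma aniso (F : finFieldType) (a b : F) : (#|F| %% 4 = 3)%N ->
  a * a + b * b = 0 -> a = 0 /\ b = 0.
Proof.
move=> Hq Hab.
have key : forall a b : F, a * a + b * b = 0 -> a = 0.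
  move=> x y Hxy; apply/eqP; apply/negPn/negP => hx.
  pose i := y / x.
  have hi : i * i = -1.
    rewrite /i; apply/eqP; rewrite -subr_eq0 opprK.
    have -> : y / x * (y / x) + 1 = (x * x + y * y) / (x * x) by field.
    by rewrite Hxy mul0r.
  have := expf_card i.
  have -> : #|F| = (4 * (#|F| %/ 4) + 3)%N by lia.
  have i4 : i ^+ 4 = 1.
    have -> : (4 = 2 * 2)%N by []. rewrite exprM. rewrite [i ^+ 2]expr2 hi expr2 mulrNN mulr1 //.
  rewrite exprD exprM i4 expr1n mul1r exprS expr2 mulrA hi mulN1r => /esym/eqP.
  rewrite -subr_eq0 opprK => /eqP Hi.
  have : i * 2%:R = 0 by rewrite mulr_natr mulr2n.
  move/eqP; rewrite mulf_eq0 (negPf (two_neq0 Hq)) orbF => /eqP i0.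
  by move: hi; rewrite i0 mul0r => /eqP; rewrite eq_sym oppr_eq0 oner_eq0.
have ha := key _ _ Hab. split => //.
apply: (key b a); by rewrite addrC.
Qed.
Section Geo.
Variable F : finFieldType.
Hypothesis Hq : (#|F| %% 4 = 3)%N.

Definition phi (u : F * F) (a c : F) : F * F := (a * u.1 - c * u.2, a * u.2 + c * u.1).

Lemma normu_neq0 (u : F * F) : u != (0%R : F, 0%R : F) -> u.1 * u.1 + u.2 * u.2 != 0.
Proof.
case: u => a c /= h; apply/eqP => /(aniso Hq) [a0 c0].
by move: h; rewrite a0 c0 eqxx.
Qed.

Lemma phi_inj (u : F * F) a c a' c' : u != (0%R : F, 0%R : F) ->
  phi u a c = phi u a' c' -> a = a' /\ c = c'.
Proof.
move=> /normu_neq0 hN [] e1 e2.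
have h1 : (a - a') * (u.1 * u.1 + u.2 * u.2) = 0.
  have -> : (a - a') * (u.1 * u.1 + u.2 * u.2) =
     u.1 * ((a * u.1 - c * u.2) - (a' * u.1 - c' * u.2)) +
     u.2 * ((a * u.2 + c * u.1) - (a' * u.2 + c' * u.1)) by ring.
  by rewrite e1 e2 !subrr !mulr0 addr0.
have h2 : (c - c') * (u.1 * u.1 + u.2 * u.2) = 0.
  have -> : (c - c') * (u.1 * u.1 + u.2 * u.2) =
     - u.2 * ((a * u.1 - c * u.2) - (a' * u.1 - c' * u.2)) +
     u.1 * ((a * u.2 + c * u.1) - (a' * u.2 + c' * u.1)) by ring.
  by rewrite e1 e2 !subrr !mulr0 addr0.
move/eqP: h1; rewrite mulf_eq0 (negPf hN) orbF subr_eq0 => /eqP ->.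
move/eqP: h2; rewrite mulf_eq0 (negPf hN) orbF subr_eq0 => /eqP ->.
by [].
Qed.

Lemma sum_bool_card (T : finType) (P : pred T) :
  (\sum_p (P p : nat) = #|[set p | P p]|)%N.
Proof.
rewrite -sum1_card [RHS]big_mkcond /=; apply: eq_bigr => p _.
by rewrite inE; case: (P p).
Qed.

Lemma n_eq (S : {set F * F}) (u : F * F) : u != (0%R : F, 0%R : F) ->
  (\sum_x \sum_y (phi u x y \in S : nat) = #|S|)%N.
Proof.
move=> hu; rewrite pair_bigA /= sum_bool_card.
have inj : injective (fun p : F * F => phi u p.1 p.2).
  move=> [a c] [a' c'] /= /(phi_inj hu) [-> ->] //.
rewrite -(card_preimset S inj); apply: eq_card => p; by rewrite !inE.
Qed.

Lemma sum_pair (I J : finType) (G : I * J -> nat) :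
  (\sum_p G p = \sum_i \sum_j G (i, j))%N.
Proof. by rewrite pair_bigA; apply: eq_bigr => -[i j]. Qed.

Lemma dot_phi (u : F * F) a c a' c' a2 c2 a2' c2' :
  dotp (subp (phi u a c) (phi u a' c')) (subp (phi u a2 c2) (phi u a2' c2')) =
  ((a - a') * (a2 - a2') + (c - c') * (c2 - c2')) * (u.1 * u.1 + u.2 * u.2).
Proof. rewrite /dotp /subp /phi /=; ring. Qed.

Lemma rect_phi (u : F * F) x y x' y' : u != (0%R : F, 0%R : F) -> x != x' -> y != y' ->
  is_rect_nz (phi u x' y) (phi u x y) (phi u x y') (phi u x' y').
Proof.
move=> /normu_neq0 hN hx hy.
rewrite /is_rect_nz !dot_phi !subrr !mulr0 !mul0r !addr0 !add0r !mul0r eqxx /=.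
have hx1 : x' - x != 0 by rewrite subr_eq0 eq_sym.
have hx2 : x - x' != 0 by rewrite subr_eq0.
have hy1 : y' - y != 0 by rewrite subr_eq0 eq_sym.
have hy2 : y - y' != 0 by rewrite subr_eq0.
by rewrite !mulf_neq0.
Qed.

Definition Qb (S : {set F * F}) (u : F * F) (y y' x x' : F) : bool :=
  [&& u != (0%R : F, 0%R : F), x != x', y != y', phi u x y \in S, phi u x y' \in S,
      phi u x' y \in S & phi u x' y' \in S].

Definition fmap (p : (F * F) * (F * (F * (F * F)))) :=
  let: (u, (y, (y', (x, x')))) := p in
  ((phi u x' y, phi u x y, phi u x y', phi u x' y'), x' - x).

Lemma ND_le (S : {set F * F}) :
  (\sum_(u | u != (0%R : F, 0%R : F)) \sum_y \sum_y' \sum_x \sum_x'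
     (if (x != x') && (y != y') then
        (((phi u x y \in S : nat) * (phi u x y' \in S : nat)) *
         ((phi u x' y \in S : nat) * (phi u x' y' \in S : nat))) else 0)
   <= nrect_nz S * #|F|)%N.
Proof.
pose A := [set p : (F * F) * (F * (F * (F * F))) |
             Qb S p.1 p.2.1 p.2.2.1 p.2.2.2.1 p.2.2.2.2].
have -> : (\sum_(u | u != (0%R : F, 0%R : F)) \sum_y \sum_y' \sum_x \sum_x'
     (if (x != x') && (y != y') then
        (((phi u x y \in S : nat) * (phi u x y' \in S : nat)) *
         ((phi u x' y \in S : nat) * (phi u x' y' \in S : nat))) else 0) = #|A|)%N.
  rewrite -sum_bool_card sum_pair big_mkcond /=; apply: eq_bigr => u _.
  rewrite sum_pair /= /Qb; case: (u != _) => /=; last first.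
    by rewrite big1 // => y _; rewrite big1.
  apply: eq_bigr => y _; rewrite sum_pair; apply: eq_bigr => y' _.
  rewrite sum_pair; apply: eq_bigr => x _; apply: eq_bigr => x' _.
  rewrite /Qb /=.
  by case: (x != x'); case: (y != y'); case: (phi u x y \in S); case: (phi u x y' \in S);
     case: (phi u x' y \in S); case: (phi u x' y' \in S).
rewrite /nrect_nz -(cardsT F) -cardsX -(card_in_imset (f := fmap) (D := A)).
  apply: subset_leq_card; apply/subsetP => _ /imsetP [[u [y [y' [x x']]]] pA ->].
  rewrite inE /Qb /= in pA.
  case/andP: pA => hu /andP [hx /andP [hy /andP [h1 /andP [h2 /andP [h3 h4]]]]].
  rewrite /fmap inE /= inE in_setT andbT /= h1 h2 h3 h4 /=.
  exact: rect_phi.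
move=> [[a1 b1] [y1 [y1' [x1 x1']]]] [[a2 b2] [y2 [y2' [x2 x2']]]].
rewrite !inE /Qb /=.
case/andP => hu /andP [hx _] /andP [hu2 _] /=.
case=> eX1 eX2 eZ1 eZ2 eY1 eY2 eT1 eT2 es.
have hs : x1' - x1 != 0 by rewrite subr_eq0 eq_sym.
have k1 : (x1' - x1) * a1 = (x2' - x2) * a2.
  move: eX1 eZ1 => p1 p2.
  have -> : (x1' - x1) * a1 = (x1' * a1 - y1 * b1) - (x1 * a1 - y1 * b1) by ring.
  rewrite p1 p2; ring.
have k2 : (x1' - x1) * b1 = (x2' - x2) * b2.
  move: eX2 eZ2 => p1 p2.
  have -> : (x1' - x1) * b1 = (x1' * b1 + y1 * a1) - (x1 * b1 + y1 * a1) by ring.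
  rewrite p1 p2; ring.
rewrite -es in k1 k2.
have ea := mulfI hs k1; have eb := mulfI hs k2.
subst a2 b2.
have eZ : phi (a1, b1) x1 y1 = phi (a1, b1) x2 y2 by rewrite /phi /= eZ1 eZ2.
have [ex ey] := phi_inj hu eZ. subst x2 y2.
have eY : phi (a1, b1) x1 y1' = phi (a1, b1) x1 y2' by rewrite /phi /= eY1 eY2.
have [_ ey'] := phi_inj hu eY. subst y2'.
have ex' : x1' = x2' by rewrite -(subrK x1 x1') es subrK.
by rewrite ex'.
Qed.

Lemma main_nat (S : {set F * F}) :
  (8 * #|F| ^ 5 <= #|S| ^ 3)%N -> (#|S| ^ 4 <= 4 * #|F| ^ 3 * nrect_nz S)%N.
Proof.
move=> H.
set q := #|F|; set n := #|S|; set R := nrect_nz S.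
have q3 : (3 <= q)%N by rewrite /q; lia.
pose ND := fun u : F * F => (\sum_y \sum_y' \sum_x \sum_x'
     (if (x != x') && (y != y') then
        (((phi u x y \in S : nat) * (phi u x y' \in S : nat)) *
         ((phi u x' y \in S : nat) * (phi u x' y' \in S : nat))) else 0))%N.
have Hu : forall u : F * F, u != (0%R : F, 0%R : F) ->
   (n ^ 4 <= q ^ 4 * (ND u + 2 * q * n))%N.
  move=> u hu.
  have h1 := W4_lb (fun x y => phi u x y \in S).
  have h2 := W4_deg (fun x y => phi u x y \in S).
  rewrite /= n_eq // in h1 h2.
  apply: (leq_trans h1); rewrite leq_mul2l; apply/orP; right; exact: h2.
have Hs : (\sum_(u : F * F | u != (0%R : F, 0%R : F)) n ^ 4 <=
           \sum_(u : F * F | u != (0%R : F, 0%R : F)) q ^ 4 * (ND u + 2 * q * n))%N.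
  by apply: leq_sum.
have HN : (\sum_(u : F * F | u != (0%R : F, 0%R : F)) ND u <= R * q)%N by exact: ND_le.
rewrite sum_nat_cond_const -big_distrr /= big_split /= sum_nat_cond_const in Hs.
have cardU : #|[set u : F * F | u != (0%R : F, 0%R : F)]| = (q * q - 1)%N.
  have -> : [set u : F * F | u != (0%R : F, 0%R : F)] = [set~ (0%R : F, 0%R : F)].
    by apply/setP => v; rewrite !inE.
  by rewrite cardsC1 card_prod subn1.
rewrite cardU in Hs.
move: Hs HN.
set D := (\sum_(i | _) ND i)%N.
move=> Hs HN.
rewrite -/q -/n in H.
have q9 : (1 <= q * q)%N by apply: (leq_trans (isT : (1 <= 9)%N) (leq_mul q3 q3)).
move: Hs HN H q3 q9; clearbody D; clear ND Hu cardU.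
move: (q * q - 1)%N (@subnK 1 (q * q)) => m hm.
move=> Hs HN H q3 q9; have {}hm := hm q9.
have B1 : (q ^ 4 * D <= q ^ 5 * R)%N.
  have -> : (q ^ 5 * R = q ^ 4 * (R * q))%N by ring.
  by rewrite leq_mul2l HN orbT.
have A1 : (m * n ^ 4 <= q ^ 5 * R + m * (2 * q ^ 5 * n))%N.
  apply: (leq_trans Hs).
  have -> : (q ^ 4 * (D + m * (2 * q * n)) = q ^ 4 * D + m * (2 * q ^ 5 * n))%N by ring.
  by rewrite leq_add2r.
have A2 : (8 * q ^ 5 * n <= n ^ 4)%N.
  have -> : (n ^ 4 = n ^ 3 * n)%N by ring.
  by rewrite leq_mul2r H orbT.
have A3 : (m * (8 * q ^ 5 * n) <= m * n ^ 4)%N by rewrite leq_mul2l A2 orbT.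
have A4 : (3 * (m * n ^ 4) <= 4 * (q ^ 5 * R))%N.
  have E : (m * (8 * q ^ 5 * n) = 4 * (m * (2 * q ^ 5 * n)))%N by ring.
  rewrite E in A3.
  move: A1 A3; move: (m * n ^ 4)%N (q ^ 5 * R)%N (m * (2 * q ^ 5 * n))%N => X Y Z.
  lia.
have m8 : (q * q <= 3 * m)%N.
  have : (9 <= q * q)%N by apply: (leq_mul q3 q3).
  lia.
have A5 : (q * q * n ^ 4 <= q * q * (4 * q ^ 3 * R))%N.
  have -> : (q * q * (4 * q ^ 3 * R) = 4 * (q ^ 5 * R))%N by ring.
  apply: leq_trans A4; rewrite mulnA leq_mul2r m8 orbT //.
by rewrite leq_pmul2l // in A5; lia.
Qed.

End Geo.

From Stdlib Require Import Reals Lra.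
Open Scope R_scope.
Lemma INR_expn (a k : nat) : INR (expn a k) = INR a ^ k.
Proof.
elim: k => [|k IH]; first by rewrite expn0.
by rewrite expnS mult_INR IH.
Qed.

Theorem lemma2p3 :
  exists C c : R, 0 < C /\ 0 < c /\
    forall (F : finFieldType), (#|F| %% 4 = 3%nat)%nat ->
    forall S : {set F * F},
      C * Rpower (INR #|F|) (5 / 3) <= INR #|S| ->
      c * (INR #|S|) ^ 4 / (INR #|F|) ^ 3 <= INR (nrect_nz S).
Proof.
exists 2, (1/4); split; first lra; split; first lra.
move=> F Hq S H.
have q3 : leq 3 #|F| by move: Hq; case: #|F| => [|[|[|k]]].
have qpos : 0 < INR #|F|.
  apply: lt_0_INR; apply/ltP; exact: leq_trans q3.
have rp : Rpower (INR #|F|) (5 / 3) ^ 3 = INR #|F| ^ 5.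
  rewrite -Rpower_pow; last by apply: exp_pos.
  rewrite Rpower_mult -Rpower_pow //; congr Rpower; simpl; field.
have H3 : 8 * INR #|F| ^ 5 <= INR #|S| ^ 3.
  rewrite -rp.
  have -> : 8 * Rpower (INR #|F|) (5 / 3) ^ 3 = (2 * Rpower (INR #|F|) (5 / 3)) ^ 3 by ring.
  apply: pow_incr; split => //.
  have := exp_pos (5 / 3 * ln (INR #|F|)); rewrite /Rpower; lra.
have Hn : leq (muln 8 (expn #|F| 5)) (expn #|S| 3).
  apply/leP; apply: INR_le; rewrite mult_INR !INR_expn.
  by rewrite (_ : INR 8 = 8) //; simpl; ring.
have := main_nat Hq Hn => /leP /le_INR.
rewrite !mult_INR (_ : INR 4 = 4); last by simpl; ring.
move=> h.
have q3p : 0 < INR #|F| ^ 3 by apply: pow_lt.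
apply (Rmult_le_reg_r (INR #|F| ^ 3)) => //.
have -> : 1 / 4 * INR #|S| ^ 4 / INR #|F| ^ 3 * INR #|F| ^ 3 = 1 / 4 * INR #|S| ^ 4.
  field; apply: Rgt_not_eq; exact: qpos.
have e1 : INR #|S| ^ 4 = INR #|S| * (INR #|S| * (INR #|S| * INR #|S|)) by ring.
have e2 : INR (nrect_nz S) * INR #|F| ^ 3 = 1 / 4 * (4 * (INR #|F| * (INR #|F| * INR #|F|)) * INR (nrect_nz S)) by field.
rewrite e1 e2; lra.
Qed.
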